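(* Let $0 < \nu \leq \tau < \eta \ll 1$ be constants. Suppose $G$ is a graph on $n$ vertices with $\delta(G) \geq \eta n$ which is a robust $(\nu,\tau)$-expander, and let $M$ be a perfect matching in $G$. Then for every $a \in V(G)$, $G$ contains a shifted $M$-walk of length at most $3/\nu$ which both starts and finishes at $a$.
   Context: The notation $\eta \ll 1$ means $\eta$ is chosen sufficiently small (below some absolute positive constant). For a graph $G$ on $n$ vertices and $S \subseteq V(G)$, $RN_{\nu,G}(S)$ is the set of vertices $v$ with $|N(v) \cap S| \geq \nu n$; $G$ is a robust $(\nu,\tau)$-expander if every $S \subseteq V(G)$ with $\tau n \leq |S| \leq (1-\tau)n$ satisfies $|RN_{\nu,G}(S)| \geq |S| + \nu n$. Given a perfect matching $M$ in $G$, a shifted $M$-walk with endpoints $v_1$ and $v_{2\ell}$ is a walk $v_1 v_2 \dots v_{2\ell}$ in $G$ such that $v_{2i}v_{2i+1} \in M$ for every $1 \leq i \leq \ell - 1$ and $v_{2i-1}v_{2i} \notin M$ for every $1 \leq i \leq \ell$; its length is its number of edges. *)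

(* Defs.v *)
From HB Require Import structures.
From mathcomp Require Import all_boot all_order all_algebra.
Set Implicit Arguments. Unset Strict Implicit. Unset Printing Implicit Defensive.
Import Order.TTheory GRing.Theory Num.Theory.
Local Open Scope ring_scope.

Definition simple_graph (T : finType) (G : rel T) : Prop :=
  (forall x y, G x y = G y x) /\ (forall x, ~~ G x x).

Definition nbhd (T : finType) (G : rel T) (v : T) : {set T} := [set u | G v u].

Definition min_deg_ge (R : realFieldType) (T : finType) (G : rel T) (d : R) : Prop :=
  forall v : T, d <= (#|nbhd G v|)%:R.

Definition robust_nbhd (R : realFieldType) (T : finType) (G : rel T) (nu : R)
  (S : {set T}) : {set T} :=
  [set v | nu * (#|T|)%:R <= (#|nbhd G v :&: S|)%:R].

Definition robust_expander (R : realFieldType) (T : finType) (G : rel T)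
  (nu tau : R) : Prop :=
  forall S : {set T},
    tau * (#|T|)%:R <= (#|S|)%:R -> (#|S|)%:R <= (1 - tau) * (#|T|)%:R ->
    (#|S|)%:R + nu * (#|T|)%:R <= (#|robust_nbhd G nu S|)%:R.

Definition perfect_matching (T : finType) (G M : rel T) : Prop :=
  (forall x y, M x y = M y x) /\ (forall x y, M x y -> G x y) /\
  (forall x, #|[set y | M x y]| = 1%N).

Definition is_walk (T : finType) (G : rel T) (s : seq T) : Prop :=
  (0 < size s)%N /\ forall (x0 : T) j, (j.+1 < size s)%N -> G (nth x0 s j) (nth x0 s j.+1).

(* Shifted M-walk v_1 ... v_{2l} (l >= 1), stored 0-indexed as s = [v_1;...;v_{2l}]:
   v_{2i} v_{2i+1} in M for 1 <= i <= l-1, and v_{2i-1} v_{2i} not in M for 1 <= i <= l. *)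
Definition shifted_walk (T : finType) (G M : rel T) (s : seq T) : Prop :=
  exists l : nat, (0 < l)%N /\ size s = (2 * l)%N /\ is_walk G s /\
    (forall (x0 : T) i, (1 <= i <= l - 1)%N ->
       M (nth x0 s (2 * i - 1)) (nth x0 s (2 * i))) /\
    (forall (x0 : T) i, (1 <= i <= l)%N ->
       ~~ M (nth x0 s (2 * i - 2)) (nth x0 s (2 * i - 1))).

Definition walk_length (T : Type) (s : seq T) : nat := (size s).-1.

(* Main.v *)
Require Import Defs.
From HB Require Import structures.
From mathcomp Require Import all_boot all_order all_algebra.
From mathcomp Require Import zify ring lra.
Import Order.TTheory GRing.Theory Num.Theory.
Local Open Scope ring_scope.

Fixpoint sw (T : finType) (G M : rel T) (s : seq T) : Prop :=
  match s with
  | x :: y :: t => G x y /\ ~~ M x y /\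
      match t with [::] => True | z :: _ => M y z /\ sw T G M t end
  | _ => False
  end.
Arguments sw {T}.

Lemma sw_shifted (T : finType) (G M : rel T) :
  (forall x y, M x y -> G x y) ->
  forall s, sw G M s -> shifted_walk G M s.
Proof.
move=> MG n.
have [k Hk] : exists k, (size n <= k)%N by exists (size n).
elim: k n Hk => [|k IH] [|x [|y t]] //= Hk.
move=> [Gxy [nMxy Ht]].
case: t Hk Ht => [|z t'] Hk Ht.
  exists 1%N; split=> //; split=> //; split.
    split=> // x0 [|j] //=.
  split=> x0 i; first by lia.
  move=> Hi; have -> : i = 1%N by lia. by [].
case: Ht => Myz swt.
have [l [l0 [szl [[_ wt] [Mt nMt]]]]] := IH (z :: t') ltac:(simpl in *; lia) swt.
exists l.+1; split=> //; split; first by move: szl => /= ->; lia.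
split; first split=> //.
  move=> x0 [|[|j]] /= Hj //; first exact: MG.
  by apply: wt; simpl in *; lia.
split.
  move=> x0 [|[|i]] Hi; first by lia.
    by [].
  have -> : (2 * i.+2 - 1 = (2 * i.+1 - 1).+2)%N by lia.
  have -> : (2 * i.+2 = (2 * i.+1).+2)%N by lia.
  by apply: Mt; lia.
move=> x0 [|[|i]] Hi; first by lia.
  by [].
have -> : (2 * i.+2 - 2 = (2 * i.+1 - 2).+2)%N by lia.
have -> : (2 * i.+2 - 1 = (2 * i.+1 - 1).+2)%N by lia.
by apply: nMt; lia.
Qed.

Lemma sw_cat (T : finType) (G M : rel T) x0 s1 s2 :
  sw G M s1 -> sw G M s2 -> M (last x0 s1) (head x0 s2) -> sw G M (s1 ++ s2).
Proof.
have [k Hk] : exists k, (size s1 <= k)%N by exists (size s1).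
elim: k s1 Hk => [|k IH] [|x [|y t]] //= Hk.
move=> [Gxy [nMxy Ht]] sw2 Mls.
split=> //; split=> //.
case: t Hk Ht Mls => [|z t'] Hk Ht Mls /=.
  by move: sw2 Mls; clear IH; case: s2.
case: Ht => Myz swt; split=> //.
by apply: (IH (z :: t')) => //; simpl in *; lia.
Qed.

Lemma sw_nil (T : finType) (G M : rel T) s : sw G M s -> s <> [::].
Proof. by case: s. Qed.

Lemma sw_rev (T : finType) (G M : rel T) :
  (forall x y, G x y = G y x) -> (forall x y, M x y = M y x) ->
  forall s, sw G M s -> sw G M (rev s).
Proof.
move=> Gs Ms s.
have [k Hk] : exists k, (size s <= k)%N by exists (size s).
elim: k s Hk => [|k IH] [|x [|y t]] //= Hk.
move=> [Gxy [nMxy Ht]].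
have -> : rev [:: x, y & t] = rev t ++ [:: y; x].
  by rewrite !rev_cons -!cats1 -catA.
case: t Hk Ht => [|z t'] Hk Ht.
  by rewrite /= Gs Ms.
case: Ht => Myz swt.
apply: (@sw_cat T G M z).
- by apply: IH => //; simpl in *; lia.
- by rewrite /= Gs Ms.
- by rewrite rev_cons last_rcons /= Ms.
Qed.
Definition partner (T : finType) (M : rel T) (x : T) : T := odflt x [pick y | M x y].
Arguments partner {T}.

Lemma partnerP {T : finType} {M : rel T} :
  (forall x, #|[set y | M x y]| = 1%N) ->
  forall x, M x (partner M x) /\ forall y, M x y -> y = partner M x.
Proof.
move=> Mc x.
have /cards1P [z Hz] : #|[set y | M x y]| == 1%N by rewrite Mc.
have Hm : forall y, M x y = (y == z).
  by move=> y; rewrite -in_set1 -Hz inE.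
rewrite /partner; case: pickP => [y Hy|H] /=.
  split=> // y' Hy'; move: Hy Hy'; rewrite !Hm => /eqP -> /eqP -> //.
by have := H z; rewrite Hm eqxx.
Qed.

Fixpoint Gs (T : finType) (G M : rel T) (a : T) (k : nat) : {set T} :=
  match k with
  | 0 => [set v | M a v]
  | k.+1 => Gs T G M a k :|:
      [set v | [exists u in Gs T G M a k, [exists w, M u w && G w v && ~~ M w v]]]
  end.
Arguments Gs {T}.

Lemma Gs_reach {T : finType} {G M : rel T} {a} :
  simple_graph G -> perfect_matching G M ->
  forall k v, v \in Gs G M a k -> M a v \/
    exists s, sw G M s /\ head a s = a /\ last a s = v /\ (size s <= 2 * k)%N.
Proof.
move=> [Gsym Girr] [Msym [MG Mc]] k.
elim: k => [|k IH] v /=; first by rewrite inE; left.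
rewrite !inE => /orP [/IH [H|[s [ss [hs [ls zs]]]]]|].
- by left.
- by right; exists s; do !split=> //; lia.
move=> /existsP [u /andP [uG /existsP [w /andP [/andP [Muw Gwv] nMwv]]]].
right; case: (IH u uG) => [Mau|[s [ss [hs [ls zs]]]]].
  have Ew : w = a.
    have [_ U] := partnerP Mc u.
    by rewrite (U _ Muw) (U a); rewrite // Msym.
  subst w; exists [:: a; v] => /=; do !split => //; lia.
exists (s ++ [:: w; v]); split.
  apply: (@sw_cat T G M a) => //=; by rewrite ?ls.
case: s ss hs ls zs => [|x s'] //= ss hs ls zs.
split=> //; split; first by rewrite last_cat.
rewrite size_cat /=; lia.
Qed.

Lemma Gs_closed (T : finType) (G M : rel T) a k :
  simple_graph G -> perfect_matching G M ->
  (exists v w, [/\ v \in Gs G M a k, w \in Gs G M a k & M v w]) ->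
  exists s, sw G M s /\ head a s = a /\ last a s = a /\ (size s <= 4 * k)%N.
Proof.
move=> Sg Pm [v [w [vG wG Mvw]]].
have [Gsym Girr] := Sg; have [Msym [MG Mc]] := Pm.
have uniq2 : forall x y z, M x y -> M x z -> y = z.
  move=> x y z Hy Hz; have [_ U] := partnerP Mc x.
  by rewrite (U _ Hy) (U _ Hz).
case: (Gs_reach Sg Pm _ _ vG) => [Mav|[s1 [ss1 [hs1 [ls1 zs1]]]]];
case: (Gs_reach Sg Pm _ _ wG) => [Maw|[s2 [ss2 [hs2 [ls2 zs2]]]]].
- have Ew : w = a by apply: (uniq2 v) => //; rewrite Msym.
  subst w; by move: (Girr a); rewrite (MG _ _ Maw).
- have Ew : w = a by apply: (uniq2 v) => //; rewrite Msym.
  exists s2; do !split => //; [by rewrite ls2 | lia].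
- have Ev : v = a by apply: (uniq2 w) => //; rewrite Msym.
  exists s1; do !split => //; [by rewrite ls1 | lia].
exists (s1 ++ rev s2); split.
  apply: (@sw_cat T G M a) => //; first exact: sw_rev.
  case: s2 ss2 hs2 ls2 zs2 => [|y s2'] //= _ -> ls2 _.
  rewrite rev_cons -cats1 ls1.
  case/lastP: s2' ls2 => [|s3 z] /= ls2; first by rewrite ls2.
  by rewrite last_rcons in ls2; rewrite rev_rcons /= ls2.
case: s1 ss1 hs1 ls1 zs1 => [|x s1'] //= _ hs1 ls1 zs1.
split=> //; split.
  case: s2 ss2 hs2 ls2 zs2 => [|y s2'] //= _ -> _ _.
  by rewrite last_cat rev_cons last_rcons.
rewrite size_cat size_rev /=; lia.
Qed.

Lemma partner_inv {T : finType} {G M : rel T} :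
  perfect_matching G M -> forall x, partner M (partner M x) = x.
Proof.
move=> [Msym [MG Mc]] x.
have [H1 _] := partnerP Mc x.
have [_ U] := partnerP Mc (partner M x).
by symmetry; apply: U; rewrite Msym.
Qed.

Lemma nocoll_card {T : finType} {G M : rel T} (A : {set T}) :
  perfect_matching G M ->
  (forall v w, v \in A -> w \in A -> ~~ M v w) -> (2 * #|A| <= #|T|)%N.
Proof.
move=> Pm NC.
have [Msym [MG Mc]] := Pm.
have inj : injective (partner M) by apply: (can_inj (partner_inv Pm)).
have ci : #|partner M @: A| = #|A| := card_imset _ inj.
have dis : A :&: (partner M @: A) = set0.
  apply/setP => y; rewrite !inE; apply/negbTE/negP => /andP [yA /imsetP [v vA Ey]].
  have [H _] := partnerP Mc v.
  by move: (NC v y vA yA); rewrite Ey H.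
have E := cardsUI A (partner M @: A); rewrite dis cards0 addn0 ci in E.
have := subset_leq_card (subsetT (A :|: partner M @: A)); rewrite cardsT; lia.
Qed.

Lemma RN_sub {R : realFieldType} {T : finType} {G M : rel T} a k (nu : R) :
  simple_graph G -> perfect_matching G M -> 0 < nu * (#|T|)%:R ->
  robust_nbhd G nu (partner M @: Gs G M a k) \subset Gs G M a k.+1.
Proof.
move=> [Gsym Girr] Pm Hpos.
have [Msym [MG Mc]] := Pm.
apply/subsetP => v; rewrite inE => Hv.
have : (0 < #|nbhd G v :&: [set partner M x | x in Gs G M a k]|)%N.
  rewrite lt0n; apply/negP => /eqP E; move: Hv; rewrite E.
  by move=> H; move: (lt_le_trans Hpos H); rewrite ltxx.
move=> /card_gt0P [w]; rewrite !inE => /andP [Gvw /imsetP [u uG Ew]].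
case E: (M w v).
  have -> : v = u.
    have [_ U] := partnerP Mc w.
    by rewrite (U _ E) Ew (partner_inv Pm).
  by apply/orP; left; exact: uG.
apply/orP; right; apply/existsP; exists u; apply/andP; split; first exact: uG.
apply/existsP; exists w; rewrite Ew.
have [H _] := partnerP Mc u.
by rewrite H -Ew Gsym Gvw E.
Qed.

Lemma nbhd_sub {T : finType} {G M : rel T} a :
  simple_graph G -> perfect_matching G M -> nbhd G a \subset Gs G M a 1.
Proof.
move=> [Gsym Girr] [Msym [MG Mc]].
apply/subsetP => v; rewrite inE => Gav /=.
rewrite !inE; case E: (M a v) => //=.
apply/existsP; exists (partner M a).
have [H _] := partnerP Mc a.
rewrite inE H /=; apply/existsP; exists a.
by rewrite Msym H Gav E.
Qed.

Definition collb {T : finType} (M : rel T) (A : {set T}) : bool :=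
  [exists v, [exists w, [&& v \in A, w \in A & M v w]]].

Lemma collbP {T : finType} (M : rel T) (A : {set T}) :
  collb M A -> exists v w, [/\ v \in A, w \in A & M v w].
Proof.
by move=> /existsP [v /existsP [w /and3P [H1 H2 H3]]]; exists v, w.
Qed.

Lemma ncollbP {T : finType} (M : rel T) (A : {set T}) :
  ~~ collb M A -> forall v w, v \in A -> w \in A -> ~~ M v w.
Proof.
move=> H v w vA wA; apply/negP => Mvw; move/negP: H; apply.
by apply/existsP; exists v; apply/existsP; exists w; rewrite vA wA Mvw.
Qed.

Lemma collb_mono {T : finType} (G M : rel T) a k :
  collb M (Gs G M a k) -> collb M (Gs G M a k.+1).
Proof.
move=> /collbP [v [w [vA wA Mvw]]].
apply/existsP; exists v; apply/existsP; exists w.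
by rewrite /= !inE vA wA Mvw.
Qed.


Lemma aux1 (R : realFieldType) (c n t : R) : 2 * c <= n -> t <= 1/2 * n -> c <= n - t.
Proof. lra. Qed.
Lemma aux2 (R : realFieldType) (e x y c c2 : R) : e + x <= c -> c + y <= c2 -> e + (x + y) <= c2.
Proof. lra. Qed.
Lemma aux3 (R : realFieldType) (c y c2 : R) : 0 < y -> c + y <= c2 -> c < c2.
Proof. lra. Qed.
Lemma aux4 (R : realFieldType) (t e x c : R) : t <= e -> 0 <= x -> e + x <= c -> t <= c.
Proof. lra. Qed.

Lemma growth {R : realFieldType} {T : finType} {G M : rel T} a (nu tau eta : R) :
  0 < nu -> nu <= tau -> tau < eta -> tau <= 1/2 ->
  simple_graph G -> min_deg_ge G (eta * (#|T|)%:R) ->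
  robust_expander G nu tau -> perfect_matching G M ->
  forall k, collb M (Gs G M a k.+1) \/
    (eta * (#|T|)%:R + k%:R * nu * (#|T|)%:R <= (#|Gs G M a k.+1|)%:R /\
     (k.+1 <= #|Gs G M a k.+1|)%N).
Proof.
move=> nu0 nutau taueta tauh Sg Md Ex Pm.
have n0 : (0 < #|T|)%N by apply/card_gt0P; exists a.
have nR0 : (0 : R) < (#|T|)%:R by rewrite ltr0n.
have nun : 0 < nu * (#|T|)%:R by apply: mulr_gt0.
elim=> [|k IH].
  case: (boolP (collb M (Gs G M a 1))) => [C|NC]; first by left.
  right; split.
    rewrite mul0r mul0r addr0; apply: (le_trans (Md a)).
    by rewrite ler_nat; apply: subset_leq_card; apply: nbhd_sub.
  apply/card_gt0P; exists (partner M a).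
  have [_ [_ Mc]] := Pm; have [H _] := partnerP Mc a.
  by rewrite /= !inE H.
case: (boolP (collb M (Gs G M a k.+2))) => [C|NC]; first by left.
right.
case: IH => [C|[IH1 IH2]].
  by move: NC; rewrite collb_mono.
have NC1 : ~~ collb M (Gs G M a k.+1).
  by apply/negP => C; move: NC; rewrite collb_mono.
have hc := nocoll_card _ Pm (@ncollbP _ _ _ NC1).
set c := #|Gs G M a k.+1| in IH1 IH2 hc *.
have inj : injective (partner M) by apply: (can_inj (partner_inv Pm)).
have cS : #|partner M @: Gs G M a k.+1| = c by rewrite card_imset.
have hcR : 2 * c%:R <= (#|T|)%:R :> R.
  by rewrite -(natrM R 2) ler_nat.
have kpos : 0 <= k%:R * nu * (#|T|)%:R :> R.
  by rewrite -mulrA mulr_ge0 // ltW.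
have := Ex (partner M @: Gs G M a k.+1); rewrite cS => Ex'.
have lo : tau * (#|T|)%:R <= c%:R.
  have : tau * (#|T|)%:R <= eta * (#|T|)%:R by rewrite ler_pM2r // ltW.
  by move=> H; apply: aux4 H kpos IH1.
have hi : c%:R <= (1 - tau) * (#|T|)%:R.
  have : tau * (#|T|)%:R <= 1/2 * (#|T|)%:R by rewrite ler_pM2r.
  by move=> H; rewrite mulrBl mul1r; apply: aux1.
have := Ex' lo hi.
have := subset_leq_card (RN_sub a k.+1 nu Sg Pm nun); rewrite -(ler_nat R) => H1 H2.
have H3 := le_trans H2 H1.
split.
  rewrite -natr1 mulrDl mul1r mulrDl.
  exact: aux2 IH1 H3.
have : (c%:R : R) < (#|Gs G M a k.+2|)%:R by apply: aux3 nun H3.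
rewrite ltr_nat => H4; exact: leq_ltn_trans IH2 H4.
Qed.

Lemma aux5 (R : realFieldType) (e x n c : R) :
  0 < e -> 1/2 * n < x -> e + x <= c -> 2 * c <= n -> False.
Proof. lra. Qed.
Lemma aux6 (R : realFieldType) (k nu : R) :
  k * nu <= 1/2 -> nu <= 1/8 -> 0 < nu -> 4 * (k + 2) * nu <= 3.
Proof. nra. Qed.
Lemma aux7 (R : realFieldType) (nu tau eta : R) :
  nu <= tau -> tau < eta -> eta <= 8%:R^-1 -> [/\ tau <= 1/2, eta <= 1/8 & nu <= 1/8].
Proof. move=> *; split; lra. Qed.
Lemma aux8 (n K c : nat) : (n < K)%N -> (K.+1 <= c)%N -> (2 * c <= n)%N -> False.
Proof. lia. Qed.
Lemma aux9 (R : realFieldType) : ~~ ((1/2 : R) < 0).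
Proof. rewrite -leNgt; lra. Qed.

Theorem lemma5p3 :
  exists eta0 : rat, 0 < eta0 /\
  forall (R : realFieldType) (nu tau eta : R),
    0 < nu -> nu <= tau -> tau < eta -> eta <= ratr eta0 ->
  forall (T : finType) (G M : rel T),
    simple_graph G ->
    min_deg_ge G (eta * (#|T|)%:R) ->
    robust_expander G nu tau ->
    perfect_matching G M ->
  forall a : T, exists s : seq T,
    shifted_walk G M s /\ head a s = a /\ last a s = a /\
    (walk_length s)%:R <= 3 / nu.
Proof.
exists (8%:R^-1); split; first by [].
move=> R nu tau eta nu0 nutau taueta etab T G M Sg Md Ex Pm a.
move: etab; rewrite fmorphV rmorph_nat => etab.
have [tauh e8 nu8] := aux7 _ _ _ _ nutau taueta etab.
have n0 : (0 < #|T|)%N by apply/card_gt0P; exists a.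
have nR0 : (0 : R) < (#|T|)%:R by rewrite ltr0n.
pose P := fun k : nat => (1/2 < k%:R * nu) || (#|T| < k)%N.
have exP : exists k, P k by exists (#|T|).+1; rewrite /P ltnSn orbT.
case: (ex_minnP exP) => K0 PK0 minK.
case: (boolP (collb M (Gs G M a K0.+1))) => [C|NC]; last first.
  have [C|[H1 H2]] := growth a nu tau eta nu0 nutau taueta tauh Sg Md Ex Pm K0.
    by rewrite C in NC.
  have hc := nocoll_card _ Pm (@ncollbP _ _ _ NC).
  exfalso; move: PK0; rewrite /P => /orP [HK|HK]; last exact: aux8 HK H2 hc.
  have hcR : 2 * (#|Gs G M a K0.+1|)%:R <= (#|T|)%:R :> R.
    by rewrite -(natrM R 2) ler_nat.
  have H3 : 1/2 * (#|T|)%:R < K0%:R * nu * (#|T|)%:R by rewrite ltr_pM2r.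
  have H4 : 0 < eta * (#|T|)%:R by apply: mulr_gt0 => //; apply: lt_trans taueta; apply: lt_le_trans nutau.
  exact: aux5 _ _ _ _ _ H4 H3 H1 hcR.
have [s [ss [hs [ls zs]]]] := Gs_closed _ _ _ _ _ Sg Pm (@collbP _ _ _ C).
exists s; split; first by apply: sw_shifted => //; case: Pm => [_ []].
split=> //; split=> //.
case: K0 PK0 minK zs C => [|K1] PK0 minK zs C.
  by move: PK0; rewrite /P mul0r ltn0 orbF (negbTE (aux9 _)).
have nP : ~~ P K1.
  by apply/negP => H; have := minK _ H; rewrite ltnn.
move: nP; rewrite /P negb_or => /andP [nP1 _].
rewrite -leNgt in nP1.
have H : (walk_length s)%:R <= (4 * K1.+2)%:R :> R.
  by rewrite ler_nat /walk_length; apply: leq_trans zs; exact: leq_pred.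
rewrite ler_pdivlMr //.
apply: (le_trans (ler_wpM2r (ltW nu0) H)).
have E : (K1.+2%:R : R) = K1%:R + 2 by rewrite -[K1.+2]addn2 natrD.
rewrite natrM E.
exact: (aux6 _ _ _ nP1 nu8 nu0).
Qed.
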